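(* Let $\psi\colon\mathbb R^2\to\mathbb R$ be smooth and $p_\ast\in\mathbb R^2$ be such that conditions 1–7 below hold with $N=2$. Let $\mathsf X:=\mathbb R^2\times\mathbb S^1$ and for $\varepsilon>0$ define $V_\varepsilon\colon\mathsf X\to\mathbb R$ by $V_\varepsilon([p,o]):=y_\ast-\psi(p)+\varepsilon\langle\nabla\psi(p),o-o_\perp\rangle^2$. Let $z_\ast:=y_\ast-\underline y\in(0,\infty]$. Then there exists $\varepsilon_1>0$ such that for every $\varepsilon\in(0,\varepsilon_1)$: (i) $0<V_\varepsilon(x)<z_\ast$ for every $x=[p,o]\in\mathsf X$ with $p\ne p_\ast$; (ii) the sublevel set $\{x\in\mathsf X: V_\varepsilon(x)\le z\}$ is compact for every $z\in(0,z_\ast)$.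
   Context: $\mathbb S^1$ is the unit circle in $\mathbb R^2$; for $o\in\mathbb S^1$, $o_\perp\in\mathbb S^1$ is the unique element such that $(o,o_\perp)$ is a positively oriented orthonormal basis of $\mathbb R^2$. Notation: $y_\ast:=\psi(p_\ast)$, $\underline y:=\inf_{p}\psi(p)\in\mathbb R\cup\{-\infty\}$, $|\nabla^2\psi(p)|$ the operator norm of the Hessian, $\psi^{-1}(\ge y):=\{p:\psi(p)\ge y\}$. Conditions: (1) $\psi(p)<y_\ast$ for all $p\ne p_\ast$; (2) $\nabla^2\psi(p_\ast)$ negative definite; (3) there is $r_1>0$ with $\psi(p_\ast+v)=\psi(p_\ast-v)$ for $|v|\le r_1$; (4) there is $c_1>0$ with $|\nabla^2\psi(p)|\le c_1$ for all $p$; (5) $\nabla\psi(p)\ne0$ for $p\ne p_\ast$; (6) for every $y\in(\underline y,y_\ast)$, $\psi^{-1}(\ge y)$ is compact; (7) there are $c_2,r_2,r_3>0$ with $|\nabla^2\psi(p+v)|\le c_2|\nabla\psi(p)|$ for all $|p-p_\ast|\ge r_2$, $|v|\le r_3$. *)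

(* Defs.v *)
From HB Require Import structures.
From mathcomp Require Import all_boot all_order all_algebra.
From mathcomp Require Import all_classical all_reals all_analysis.
Set Implicit Arguments. Unset Strict Implicit. Unset Printing Implicit Defensive.
Import Order.TTheory GRing.Theory Num.Theory.
Import numFieldNormedType.Exports.
Local Open Scope classical_set_scope.
Local Open Scope ring_scope.

Section Defs.
Variable R : realType.

Definition e1 : R * R := (1, 0).
Definition e2 : R * R := (0, 1).

Definition dot (u v : R * R) : R := u.1 * v.1 + u.2 * v.2.
Definition enorm (u : R * R) : R := Num.sqrt (dot u u).

Fixpoint iterD (l : seq (R * R)) (f : R * R -> R) : R * R -> R :=
  match l with
  | [::] => f
  | v :: l' => 'D_v (iterD l' f)
  end.

Definition smooth (f : R * R -> R) : Prop :=
  forall l : seq (R * R),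
    continuous (iterD l f) /\ (forall p v, derivable (iterD l f) p v).

Definition grad (f : R * R -> R) (p : R * R) : R * R :=
  ('D_e1 f p, 'D_e2 f p).

Definition hess_app (f : R * R -> R) (p : R * R) (w : R * R) : R * R :=
  ('D_e1 ('D_e1 f) p * w.1 + 'D_e1 ('D_e2 f) p * w.2,
   'D_e2 ('D_e1 f) p * w.1 + 'D_e2 ('D_e2 f) p * w.2).

Definition hess_norm (f : R * R -> R) (p : R * R) : R :=
  sup [set enorm (hess_app f p w) | w in [set w | enorm w = 1]].

Definition hess_neg_def (f : R * R -> R) (p : R * R) : Prop :=
  forall w : R * R, w != 0 -> dot w (hess_app f p w) < 0.

Definition S1 (o : R * R) : Prop := dot o o = 1.
Definition operp (o : R * R) : R * R := (- o.2, o.1).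

Definition ybar (psi : R * R -> R) : \bar R := ereal_inf (range (fun p => (psi p)%:E)).

Definition zstar (psi : R * R -> R) (ps : R * R) : \bar R :=
  ((psi ps)%:E - ybar psi)%E.

Definition Veps (eps : R) (psi : R * R -> R) (ps : R * R)
    (x : (R * R) * (R * R)) : R :=
  psi ps - psi x.1 + eps * (dot (grad psi x.1) (x.2 - operp x.2)) ^+ 2.

End Defs.

(* Main.v *)
Require Import Defs.
From HB Require Import structures.
From mathcomp Require Import all_boot all_order all_algebra.
From mathcomp Require Import all_classical all_reals all_analysis.
From mathcomp Require Import lra ring.
Import Order.TTheory GRing.Theory Num.Theory.
Import numFieldNormedType.Exports.
Local Open Scope classical_set_scope.
Local Open Scope ring_scope.

Section S.
Variable R : realType.


Lemma line_quot (F : R * R -> R) (p v : R * R) (t : R) :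
  (fun h : R => h^-1 *: (((fun s : R => F (p + s *: v)) \o shift t) (h *: 1) - F (p + t *: v)))
  = (fun h : R => h^-1 *: ((F \o shift (p + t *: v)) (h *: v) - F (p + t *: v))).
Proof.
apply/funext => h /=; congr (_ *: (F _ - _)).
by rewrite /shift /= scaler1 scalerDl addrCA addrA [_ + p]addrC.
Qed.

Lemma line_derivable (F : R * R -> R) (p v : R * R) (t : R) :
  derivable F (p + t *: v) v -> derivable (fun s : R => F (p + s *: v)) t 1.
Proof. by rewrite /derivable line_quot. Qed.

Lemma line_derive (F : R * R -> R) (p v : R * R) (t : R) :
  'D_1 (fun s : R => F (p + s *: v)) t = 'D_v F (p + t *: v).
Proof. by rewrite /derive line_quot. Qed.


Lemma mvt_any (h : R -> R) (a b : R) : (forall t, derivable h t 1) ->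
  exists u, `|u - a| <= `|b - a| /\ h b - h a = 'D_1 h u * (b - a).
Proof.
move=> hd.
have hc : forall x, {for x, continuous h}.
  by move=> x; apply: differentiable_continuous; apply/derivable1_diffP.
have hder : forall x : R, is_derive x (1:R) h ('D_1 h x) by move=> x; apply: derivableP.
case: (lerP a b) => ab.
  have [u uab E] := MVT_segment ab (fun x _ => hder x)
     (continuous_subspaceT (fun x => hc x)).
  move: uab; rewrite in_itv /= => /andP[u1 u2].
  exists u; split=> //; rewrite !ger0_norm ?subr_ge0 //; lra.
have [u uab E] := MVT_segment (ltW ab) (fun x _ => hder x)
     (continuous_subspaceT (fun x => hc x)).
move: uab; rewrite in_itv /= => /andP[u1 u2].
exists u; split.
  rewrite !ler0_norm ?subr_le0; [lra|lra].
have -> : h b - h a = - (h a - h b) by ring.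
rewrite E; ring.
Qed.

Lemma descent (f : R -> R) (c m : R) : 0 < c ->
 (forall t, derivable f t 1) -> (forall t, derivable ('D_1 f) t 1) ->
 (forall t, `|'D_1 ('D_1 f) t| <= c) -> (forall t, m <= f t) ->
 ('D_1 f 0)^+2 <= 4 * c * (f 0 - m).
Proof.
move=> c0 fd gd g2 fm.
set g := 'D_1 f.
have A : forall s, `|g s - g 0| <= c * `|s|.
  move=> s; have [u [_ E]] := mvt_any _ 0 s gd.
  by rewrite E subr0 normrM ler_wpM2r.
have B : forall t, f t - f 0 - t * g 0 <= c * t ^+ 2.
  move=> t; have [u [Hu E]] := mvt_any _ 0 t fd.
  rewrite E subr0 -/g.
  have : `|g u - g 0| <= c * `|t|.
    apply: le_trans (A u) _; apply: ler_wpM2l; [exact: ltW | by move: Hu; rewrite !subr0].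
  have -> : g u * t - t * g 0 = t * (g u - g 0) by ring.
  move=> H; apply: le_trans (ler_norm _) _.
  rewrite normrM; apply: le_trans (ler_wpM2l (normr_ge0 t) H) _.
  by rewrite mulrCA -normrM -expr2 ger0_norm ?sqr_ge0.
have := B (- g 0 / (2 * c)); have := fm (- g 0 / (2 * c)).
set t := - g 0 / (2 * c).
have ht : t * (2 * c) = - g 0 by rewrite /t divfK // mulf_neq0 // gt_eqF.
move=> H1 H2.
have : c * t ^+ 2 * (4 * c) = (g 0)^+2.
  have -> : c * t ^+ 2 * (4 * c) = (t * (2 * c)) ^+ 2 by ring.
  by rewrite ht sqrrN.
move=> H3.
have H4 : t * g 0 * (4 * c) = - 2 * (g 0)^+2.
  have -> : t * g 0 * (4 * c) = 2 * (t * (2 * c)) * g 0 by ring.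
  rewrite ht; ring.
have c4 : 0 <= 4 * c by rewrite mulr_ge0 // ltW.
have H5 := ler_wpM2r c4 H2.
have H6 := ler_wpM2r c4 H1.
have E5 : (f t - f 0 - t * g 0) * (4 * c) = (f t - f 0) * (4 * c) - t * g 0 * (4 * c) by ring.
rewrite E5 H3 H4 in H5.
have -> : 4 * c * (f 0 - m) = f 0 * (4 * c) - m * (4 * c) by ring.
have E7 : (f t - f 0) * (4 * c) = f t * (4 * c) - f 0 * (4 * c) by ring.
rewrite E7 in H5.
have -> : 'D_1 f 0 = g 0 by []. lra.
Qed.


Lemma enorm_ge1 (a b : R) : `|a| <= enorm (a, b).
Proof.
rewrite /enorm /dot /= -sqrtr_sqr ler_sqrt; last by rewrite addr_ge0 // -expr2 sqr_ge0.
by rewrite -!expr2 lerDl sqr_ge0.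
Qed.

Lemma enorm_ge2 (a b : R) : `|b| <= enorm (a, b).
Proof.
rewrite /enorm /dot /= -sqrtr_sqr ler_sqrt; last by rewrite addr_ge0 // -expr2 sqr_ge0.
by rewrite -!expr2 lerDr sqr_ge0.
Qed.

Lemma enorm_le (a b : R) : enorm (a, b) <= `|a| + `|b|.
Proof.
rewrite /enorm /dot /=.
have -> : `|a| + `|b| = Num.sqrt ((`|a| + `|b|) ^+ 2).
  by rewrite sqrtr_sqr (ger0_norm (addr_ge0 (normr_ge0 a) (normr_ge0 b))).
rewrite ler_sqrt; last by rewrite sqr_ge0.
have ha := normr_ge0 a; have hb := normr_ge0 b.
have Ea : a * a = `|a| ^+ 2 by rewrite real_normK ?num_real // expr2.
have Eb : b * b = `|b| ^+ 2 by rewrite real_normK ?num_real // expr2.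
rewrite Ea Eb; nra.
Qed.

Lemma enorm1 (w : R * R) : enorm w = 1 -> `|w.1| <= 1 /\ `|w.2| <= 1.
Proof.
case: w => a b /= H; split.
  by rewrite -H enorm_ge1.
by rewrite -H enorm_ge2.
Qed.

Lemma hess_ge (f : R * R -> R) (p : R * R) :
  `|'D_(e1 R) ('D_(e1 R) f) p| <= hess_norm f p /\ `|'D_(e2 R) ('D_(e2 R) f) p| <= hess_norm f p.
Proof.
set S := [set enorm (hess_app f p w) | w in [set w | enorm w = 1]].
set B := (`|'D_(e1 R) ('D_(e1 R) f) p| + `|'D_(e1 R) ('D_(e2 R) f) p|)
       + (`|'D_(e2 R) ('D_(e1 R) f) p| + `|'D_(e2 R) ('D_(e2 R) f) p|).
have hub : has_ubound S.
  exists B => _ [w /= /enorm1 [h1 h2] <-].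
  rewrite /hess_app; apply: le_trans (enorm_le _ _) _.
  rewrite /B; apply: lerD; apply: le_trans (ler_normD _ _) _; rewrite !normrM;
  apply: lerD; rewrite -[X in _ <= X]mulr1; apply: ler_wpM2l => //.
have n1 : enorm (e1 R) = 1 by rewrite /enorm /dot /= mulr1 mulr0 addr0 sqrtr1.
have n2 : enorm (e2 R) = 1 by rewrite /enorm /dot /= mulr1 mulr0 add0r sqrtr1.
have m1 : S (enorm (hess_app f p (e1 R))) by exists (e1 R).
have m2 : S (enorm (hess_app f p (e2 R))) by exists (e2 R).
have hn : hess_norm f p = sup S by [].
have u0 := ub_le_sup hub.
have u1 : enorm (hess_app f p (e1 R)) <= sup S := u0 _ m1.
have u2 : enorm (hess_app f p (e2 R)) <= sup S := u0 _ m2.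
set a := 'D_(e1 R) ('D_(e1 R) f) p.
set b := 'D_(e1 R) ('D_(e2 R) f) p.
set c := 'D_(e2 R) ('D_(e1 R) f) p.
set d := 'D_(e2 R) ('D_(e2 R) f) p.
have E1 : hess_app f p (e1 R) = (a * 1 + b * 0, c * 1 + d * 0) by [].
have E2 : hess_app f p (e2 R) = (a * 0 + b * 1, c * 0 + d * 1) by [].
rewrite E1 in u1.
have k := enorm_ge1 (a * 1 + b * 0) (c * 1 + d * 0).
have k2 : `|a * 1 + b * 0| <= sup S.
  apply: (le_trans k); exact u1.
have e : forall x y : R, x * 1 + y * 0 = x by move=> x y; rewrite mulr1 mulr0 addr0.
have k4 : `|a| <= sup S by move: k2; rewrite (e a b).
rewrite E2 in u2.
have k' := enorm_ge2 (a * 0 + b * 1) (c * 0 + d * 1).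
have k3 : `|c * 0 + d * 1| <= sup S.
  apply: (le_trans k'); exact u2.
have e' : forall x y : R, x * 0 + y * 1 = y by move=> x y; rewrite mulr1 mulr0 add0r.
have k5 : `|d| <= sup S by move: k3; rewrite (e' c d).
rewrite hn; split; [exact k4 | exact k5].
Qed.

Let X := ((R * R) * (R * R))%type.

Lemma c_fst (g : R * R -> R) : continuous g -> continuous (fun x : X => g x.1).
Proof. move=> gc x; apply: continuous_comp; [exact: cvg_fst | exact: gc]. Qed.

Lemma c_o1 : continuous (fun x : X => x.2.1).
Proof.
move=> x; apply: (@continuous_comp _ _ _ snd fst); [exact: cvg_snd | exact: cvg_fst].
Qed.

Lemma c_o2 : continuous (fun x : X => x.2.2).
Proof.
move=> x; apply: (@continuous_comp _ _ _ snd snd); [exact: cvg_snd | exact: cvg_snd].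
Qed.

Lemma Veps_cont eps psi ps : continuous psi -> continuous ('D_(e1 R) psi) ->
  continuous ('D_(e2 R) psi) -> continuous (Veps eps psi ps).
Proof.
move=> c0 c1 c2 x; rewrite /continuous_at /Veps /dot /grad /operp /= !expr2.
have P := c_fst _ c0 x; have D1 := c_fst _ c1 x; have D2 := c_fst _ c2 x.
have O1 := c_o1 x; have O2 := c_o2 x.
apply: cvgD.
  apply: cvgB; [exact: cvg_cst | exact: P].
apply: cvgM; first exact: cvg_cst.
apply: cvgM; apply: cvgD; apply: cvgM; try done.
all: apply: cvgB; try done.
all: apply: cvgN; done.
Qed.

Lemma dot2_cont : continuous (fun x : X => dot x.2 x.2).
Proof.
move=> x; rewrite /dot.
have O1 := c_o1 x; have O2 := c_o2 x.
by apply: cvgD; apply: cvgM.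
Qed.


Lemma arith (eps c1 r P Q g1 g2 o1 o2 : R) : 0 < eps -> 0 < c1 ->
  eps < 1 / (16 * c1) -> o1 * o1 + o2 * o2 = 1 ->
  g1 ^+ 2 <= 4 * c1 * (P - r) -> g2 ^+ 2 <= 4 * c1 * (P - r) ->
  0 < g1 ^+ 2 + g2 ^+ 2 ->
  Q - P + eps * (g1 * (o1 - - o2) + g2 * (o2 - o1)) ^+ 2 < Q - r.
Proof.
move=> e0 c0 el oo h1 h2 gp.
have CS : (g1 * (o1 - - o2) + g2 * (o2 - o1)) ^+ 2 <= 2 * (g1 ^+ 2 + g2 ^+ 2).
  have E : 2 * (g1 ^+ 2 + g2 ^+ 2) - (g1 * (o1 - - o2) + g2 * (o2 - o1)) ^+ 2
     = (g1 * (o2 - o1) - g2 * (o1 + o2)) ^+ 2 + 2 * (g1 ^+ 2 + g2 ^+ 2) * (1 - (o1 * o1 + o2 * o2)).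
    ring.
  rewrite -subr_ge0 E oo subrr mulr0 addr0; exact: sqr_ge0.
have Pr : 0 < P - r by nra.
have e16 : eps * (16 * c1) < 1.
  by rewrite -ltr_pdivlMr ?mulr_gt0 // div1r -[X in _ < X]div1r.
set T := (g1 * (o1 - - o2) + g2 * (o2 - o1)) ^+ 2.
have T1 : T <= 16 * c1 * (P - r) by rewrite /T; lra.
have T0 : 0 <= T by exact: sqr_ge0.
have : eps * T <= eps * (16 * c1 * (P - r)) by rewrite ler_wpM2l // ltW.
have : eps * (16 * c1 * (P - r)) < P - r.
  rewrite mulrA -[X in _ < X]mul1r ltr_pM2r //.
lra.
Qed.

Lemma grad_bound (psi : R * R -> R) (c1 r : R) : smooth psi -> 0 < c1 ->
  (forall p, hess_norm psi p <= c1) -> (forall q, r <= psi q) -> forall p,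
  ('D_(e1 R) psi p) ^+ 2 <= 4 * c1 * (psi p - r) /\
  ('D_(e2 R) psi p) ^+ 2 <= 4 * c1 * (psi p - r).
Proof.
move=> sm c0 hc rm p.
have d0 : forall q v, derivable psi q v := (sm [::]).2.
have dv : forall v q w, derivable ('D_v psi) q w := fun v => (sm [:: v]).2.
have key : forall v : R * R, (forall q, `|'D_v ('D_v psi) q| <= c1) ->
    ('D_v psi p) ^+ 2 <= 4 * c1 * (psi p - r).
  move=> v hv.
  pose f := fun s : R => psi (p + s *: v).
  have Df : 'D_1 f = fun s => 'D_v psi (p + s *: v).
    by apply/funext => s; rewrite /f line_derive.
  have fd : forall t, derivable f t 1 by move=> t; apply: line_derivable.
  have gd : forall t, derivable ('D_1 f) t 1.
    by move=> t; rewrite Df; exact: (line_derivable _ _ _ _ (dv v (p + t *: v) v)).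
  have g2 : forall t, `|'D_1 ('D_1 f) t| <= c1.
    by move=> t; rewrite Df (line_derive ('D_v psi)).
  have fm : forall t, r <= f t by move=> t; exact: rm.
  have := descent _ _ _ c0 fd gd g2 fm.
  move=> H. have E1 : 'D_1 f 0 = 'D_v psi p by rewrite line_derive scale0r addr0.
  have E2 : f 0 = psi p by rewrite /f scale0r addr0.
  by rewrite -E1 -E2.
split; apply: key => q; apply: le_trans (hc q).
  exact: (hess_ge psi q).1.
exact: (hess_ge psi q).2.
Qed.
End S.

Theorem lemma1 (R : realType) (psi : R * R -> R) (ps : R * R)
  (Hsmooth : smooth psi)
  (H1 : forall p, p != ps -> psi p < psi ps)
  (H2 : hess_neg_def psi ps)
  (H3 : exists r1 : R, 0 < r1 /\
          forall v, enorm v <= r1 -> psi (ps + v) = psi (ps - v))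
  (H4 : exists c1 : R, 0 < c1 /\ forall p, hess_norm psi p <= c1)
  (H5 : forall p, p != ps -> grad psi p != 0)
  (H6 : forall y : R, (ybar psi < y%:E)%E -> y < psi ps ->
          compact [set p | y <= psi p])
  (H7 : exists c2 r2 r3 : R, [/\ 0 < c2, 0 < r2, 0 < r3 &
          forall p v, r2 <= enorm (p - ps) -> enorm v <= r3 ->
            hess_norm psi (p + v) <= c2 * enorm (grad psi p)]) :
  exists eps1 : R, 0 < eps1 /\
    forall eps : R, 0 < eps < eps1 ->
      (forall p o, S1 o -> p != ps ->
         0 < Veps eps psi ps (p, o) /\
         ((Veps eps psi ps (p, o))%:E < zstar psi ps)%E) /\
      (forall z : R, 0 < z -> (z%:E < zstar psi ps)%E ->
         compact [set x : (R * R) * (R * R) | S1 x.2 /\ Veps eps psi ps x <= z]).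
Proof.
have [c1 [c10 Hc1]] := H4.
have c0 : continuous psi := (Hsmooth [::]).1.
have cd1 : continuous ('D_(e1 R) psi) := (Hsmooth [:: e1 R]).1.
have cd2 : continuous ('D_(e2 R) psi) := (Hsmooth [:: e2 R]).1.
have lb : forall q, (ybar psi <= (psi q)%:E)%E.
  by move=> q; apply: ereal_inf_lbound; exists q.
exists (1 / (16 * c1)); split; first by rewrite divr_gt0 // mulr_gt0.
move=> eps /andP[eps0 epsl].
split.
  move=> p o So pne.
  have hpos : 0 < psi ps - psi p by rewrite subr_gt0 H1.
  have hsq : 0 <= eps * (dot (grad psi p) (o - operp o)) ^+ 2.
    by rewrite mulr_ge0 ?sqr_ge0 // ltW.
  split; first by rewrite /Veps /=; lra.
  rewrite /zstar.
  case E: (ybar psi) => [r| |].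
  - have rm : forall q, r <= psi q by move=> q; have := lb q; rewrite E lee_fin.
    have [b1 b2] := grad_bound R psi c1 r Hsmooth c10 Hc1 rm p.
    have gp : 0 < ('D_(e1 R) psi p) ^+ 2 + ('D_(e2 R) psi p) ^+ 2.
      rewrite lt_def addr_ge0 ?sqr_ge0 // andbT paddr_eq0 ?sqr_ge0 // !sqrf_eq0.
      apply: contra (H5 p pne) => /andP[/eqP a /eqP b].
      by rewrite /grad a b.
    rewrite -EFinD lte_fin /Veps /dot /grad /operp /=.
    exact: (arith R eps c1 r (psi p) (psi ps) _ _ _ _ eps0 c10 epsl So b1 b2 gp).
  - by have := lb ps; rewrite E leNgt ltey.
  - by rewrite /= ltey.
move=> z z0 zlt.
set y := psi ps - z.
have ylt : (ybar psi < y%:E)%E.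
  move: zlt; rewrite /zstar; case E: (ybar psi) => [r| |] //=.
  - rewrite -EFinD !lte_fin /y => h; lra.
  - by rewrite ltNyr.
have yps : y < psi ps by rewrite /y; lra.
have K := H6 y ylt yps.
have I := @segment_compact R (-1) 1.
apply: (subclosed_compact _ (compact_setX K (compact_setX I I))).
  have -> : [set x : (R * R) * (R * R) | S1 x.2 /\ Veps eps psi ps x <= z] =
     (fun x => dot x.2 x.2) @^-1` [set t | t = 1] `&` (Veps eps psi ps) @^-1` [set t | t <= z].
    by [].
  apply: closedI; apply: preimage_closed.
  - by move=> x _; exact: dot2_cont.
  - exact: closed_eq.
  - by move=> x _; exact: Veps_cont.
  - exact: closed_le.
move=> [p o] /= [So Vz]; split => /=.
  have hsq : 0 <= eps * (dot (grad psi p) (o - operp o)) ^+ 2.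
    by rewrite mulr_ge0 ?sqr_ge0 // ltW.
  move: Vz; rewrite /Veps /y /= => Vz; lra.
move: So; rewrite /S1 /dot => So.
split => /=; rewrite in_itv /=; apply/andP; split; nra.
Qed.
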